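(* Let $q:V\to\overline K/\overline R$ be a non-trivial generalized $(\sigma,\varepsilon)$-quadratic form with sesquilinearization $f$ such that $P_q$ spans $\mathrm{PG}(V)$, and let $U\subseteq\mathrm{Rad}(f)$ be a subspace with $U\cap\mathrm{Rad}(q)=\{0\}$. Then $q_U:V/U\to\overline K/\overline R_U$ is a well-defined generalized $(\sigma,\varepsilon)$-quadratic form with sesquilinearization $f_U$, and, with $\pi_U:V\to V/U$ the projection: (1) if $q_U$ is non-trivial, $\pi_U$ induces an isomorphism of point-line geometries from $S_q$ onto $S_{q_U}$; (2) if $q_U$ is trivial, then both $f$ and $f_U$ are alternating and $\pi_U$ induces an isomorphism from $S_q$ onto the polar space $S_{f_U}$.
   Context: $K$ division ring, $(\sigma,\varepsilon)$ admissible pair ($\sigma$ anti-automorphism, $\varepsilon^\sigma\varepsilon=1$, $t^{\sigma^2}=\varepsilon t\varepsilon^{-1}$). $K_{\sigma,\varepsilon}=\{t-t^\sigma\varepsilon\}$, $K^{\sigma,\varepsilon}=\{t:t=-t^\sigma\varepsilon\}$, $\overline K=K/K_{\sigma,\varepsilon}$, $\bar t$ class of $t$, $\bar t\circ\lambda=\overline{\lambda^\sigma t\lambda}$, $\overline K^\circ=K^{\sigma,\varepsilon}/K_{\sigma,\varepsilon}$ (a right $K$-vector space under $\circ$); closed subgroups: stable under all $\circ\lambda$; $(\bar t+\overline R)\circ\lambda=\bar t\circ\lambda+\overline R$. Generalized $(\sigma,\varepsilon)$-quadratic form with co-defect closed $\overline R$: $q:V\to\overline K/\overline R$ ($V$ right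 $K$-vector space) with $q(x\lambda)=q(x)\circ\lambda$ and trace-valued $(\sigma,\varepsilon)$-sesquilinear $f$ ($f(x\lambda,y\mu)=\lambda^\sigma f(x,y)\mu$, $f(y,x)=f(x,y)^\sigma\varepsilon$, $f(x,x)\in\{t+t^\sigma\varepsilon\}$) with $q(x+y)=q(x)+q(y)+(\overline{f(x,y)}+\overline R)$. For non-trivial $q$, $\overline R$ is a subspace of $\overline K^\circ$ and $q$ restricted to $\mathrm{Rad}(f)=\{x:f(x,V)=0\}$ is $K$-linear into $\overline K^\circ/\overline R$ with kernel $\mathrm{Rad}(q)=\{x\in\mathrm{Rad}(f):q(x)=\overline R\}$. Given $U$ as in the claim, $\overline R_U$ is the unique subspace of $\overline K^\circ$ containing $\overline R$ with $\overline R_U/\overline R=q(U)$; $q_U(x+U)=\bar t+\overline R_U$ where $\bar t+\overline R=q(x)$; $f_U(x+U,y+U)=f(x,y)$. Trivial: identically zero in the quotient. $S_q$ ($S_{q_U}$): points of the projective space represented by singular vectors and lines all of whose points are singular; $S_{f_U}$: points $[v]$ with $f_U(v,v)=0$ and lines on which $f_U$ vanishes identically. Alternating: $f(x,x)=0$ for all $x$. *)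

(* Defs.v *)
From HB Require Import structures.
From mathcomp Require Import all_boot all_order all_algebra.
Set Implicit Arguments. Unset Strict Implicit. Unset Printing Implicit Defensive.
Import GRing.Theory.
Local Open Scope ring_scope.

(* Conventions.
   - K : a division ring (unitRingType in which every nonzero element is a unit).
   - Right K-vector spaces are modelled as left modules over the converse ring K^c:
     the right product  x . lambda  is  rsc x lambda := (lambda : K^c) *: x.
   - Quotients of K by additive subgroups are modelled by representatives: a
     closed subgroup  Rbar  of  Kbar = K/K_{sigma,eps}  is represented by its
     preimage  R : K -> Prop  in K, and a map  q : V -> Kbar/Rbar  by a map
     Q : V -> K of representatives (equalities hold modulo R). *)

Section Defs.
Variable K : unitRingType.

Definition division_ring : Prop := forall x : K, x != 0 -> x \is a GRing.unit.

Definition anti_automorphism (sigma : K -> K) : Prop :=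
  [/\ forall x y, sigma (x + y) = sigma x + sigma y,
      forall x y, sigma (x * y) = sigma y * sigma x,
      sigma 1 = 1 & bijective sigma].

Definition admissible (sigma : K -> K) (eps : K) : Prop :=
  [/\ anti_automorphism sigma, sigma eps * eps = 1 &
      forall t, sigma (sigma t) = eps * t * eps^-1].

Definition Kse (sigma : K -> K) (eps : K) (t : K) : Prop :=
  exists s, t = s - sigma s * eps.

(* preimage R in K of a closed subgroup Rbar of Kbar = K / K_{sigma,eps}:
   an additive subgroup containing K_{sigma,eps}, stable under t |-> l^sigma t l *)
Definition closed_codefect (sigma : K -> K) (eps : K) (R : K -> Prop) : Prop :=
  [/\ R 0, forall a b, R a -> R b -> R (a - b),
      forall t, Kse sigma eps t -> R t &
      forall t l, R t -> R (sigma l * t * l)].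

Variable V : lmodType K^c.

Definition rsc (x : V) (l : K) : V := (l : K^c) *: x.

Definition sesquilinear (sigma : K -> K) (f : V -> V -> K) : Prop :=
  [/\ forall x x' y, f (x + x') y = f x y + f x' y,
      forall x y y', f x (y + y') = f x y + f x y' &
      forall x y l m, f (rsc x l) (rsc y m) = sigma l * f x y * m].

Definition trace_valued_form (sigma : K -> K) (eps : K) (f : V -> V -> K) : Prop :=
  [/\ sesquilinear sigma f,
      forall x y, f y x = sigma (f x y) * eps &
      forall x, exists t, f x x = t + sigma t * eps].

(* generalized (sigma,eps)-quadratic form q : V -> Kbar/Rbar, with co-defect
   Rbar (represented by R) and sesquilinearization f; q represented by Q *)
Definition gen_quad_form (sigma : K -> K) (eps : K) (R : K -> Prop)
    (Q : V -> K) (f : V -> V -> K) : Prop :=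
  [/\ closed_codefect sigma eps R,
      trace_valued_form sigma eps f,
      forall x l, R (Q (rsc x l) - sigma l * Q x * l) &
      forall x y, R (Q (x + y) - (Q x + Q y + f x y))].

Definition nontrivial (R : K -> Prop) (Q : V -> K) : Prop := exists x, ~ R (Q x).

Definition alternating (f : V -> V -> K) : Prop := forall x, f x x = 0.

Definition Rad_f (f : V -> V -> K) (x : V) : Prop := forall y, f x y = 0.
Definition Rad_q (R : K -> Prop) (Q : V -> K) (f : V -> V -> K) (x : V) : Prop :=
  Rad_f f x /\ R (Q x).

Definition subspace (U : V -> Prop) : Prop :=
  [/\ U 0, forall x y, U x -> U y -> U (x + y) & forall x l, U x -> U (rsc x l)].

Inductive span_of (S : V -> Prop) : V -> Prop :=
| span_zero : span_of S 0
| span_in x : S x -> span_of S x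
| span_add x y : span_of S x -> span_of S y -> span_of S (x + y)
| span_scale x l : span_of S x -> span_of S (rsc x l).

Definition same_set (A B : V -> Prop) : Prop := forall x, A x <-> B x.
Definition subset (A B : V -> Prop) : Prop := forall x, A x -> B x.

Definition span1 (v : V) : V -> Prop := fun x => exists l, x = rsc v l.
Definition span2 (v w : V) : V -> Prop :=
  fun x => exists l m, x = rsc v l + rsc w m.
Definition independent2 (v w : V) : Prop :=
  forall l m, rsc v l + rsc w m = 0 -> l = 0 /\ m = 0.

Definition is_point (p : V -> Prop) : Prop := exists v, v <> 0 /\ same_set p (span1 v).
Definition is_line (L : V -> Prop) : Prop :=
  exists v w, independent2 v w /\ same_set L (span2 v w).

Definition Sq_point (R : K -> Prop) (Q : V -> K) (p : V -> Prop) : Prop :=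
  exists v, [/\ v <> 0, same_set p (span1 v) & R (Q v)].
Definition Sq_line (R : K -> Prop) (Q : V -> K) (L : V -> Prop) : Prop :=
  is_line L /\ forall x, L x -> R (Q x).

Definition Sf_point (f : V -> V -> K) (p : V -> Prop) : Prop :=
  exists v, [/\ v <> 0, same_set p (span1 v) & f v v = 0].
Definition Sf_line (f : V -> V -> K) (L : V -> Prop) : Prop :=
  is_line L /\ forall x y, L x -> L y -> f x y = 0.

End Defs.

Definition image (K : unitRingType) (V W : lmodType K^c) (pi : V -> W)
  (A : V -> Prop) : W -> Prop := fun y => exists x, A x /\ pi x = y.

(* pi induces an isomorphism of point-line geometries (incidence = inclusion)
   from (Pt1, Ln1) onto (Pt2, Ln2), via  X |-> pi(X) on points and lines. *)
Definition induces_iso (K : unitRingType) (V W : lmodType K^c) (pi : V -> W)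
  (Pt1 Ln1 : (V -> Prop) -> Prop) (Pt2 Ln2 : (W -> Prop) -> Prop) : Prop :=
  (forall p, Pt1 p -> Pt2 (image pi p)) /\
      (forall p p', Pt1 p -> Pt1 p' ->
         same_set (image pi p) (image pi p') -> same_set p p') /\
      (forall p2, Pt2 p2 -> exists p, Pt1 p /\ same_set (image pi p) p2) /\
      (forall L, Ln1 L -> Ln2 (image pi L)) /\
      (forall L L', Ln1 L -> Ln1 L' ->
         same_set (image pi L) (image pi L') -> same_set L L') /\
      (forall L2, Ln2 L2 -> exists L, Ln1 L /\ same_set (image pi L) L2) /\
      (forall p L, Pt1 p -> Ln1 L ->
         (subset p L <-> subset (image pi p) (image pi L))).

(* R_U: preimage in K of Rbar_U = Rbar + q(U) *)
Definition R_U (K : unitRingType) (V : lmodType K^c) (R : K -> Prop) (Q : V -> K)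
  (U : V -> Prop) (t : K) : Prop := exists u, U u /\ R (t - Q u).

(* Main.v *)
From Pilot Require Import Defs.
From HB Require Import structures.
From Stdlib Require Import Classical.
From mathcomp Require Import all_boot all_order all_algebra.
Set Implicit Arguments. Unset Strict Implicit. Unset Printing Implicit Defensive.
Import GRing.Theory.
Local Open Scope ring_scope.

Notation img := Pilot.Defs.image.
Notation ssub := Pilot.Defs.subset.

Section Rsc.
Variable K : unitRingType.
Variable V : lmodType K^c.
Lemma rscD (x : V) l m : rsc x (l + m) = rsc x l + rsc x m.
Proof. exact: scalerDl. Qed.
Lemma rscDr (x y : V) l : rsc (x + y) l = rsc x l + rsc y l.
Proof. exact: scalerDr. Qed.
Lemma rsc0 (x : V) : rsc x 0 = 0.
Proof. exact: scale0r. Qed.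
Lemma rsc1 (x : V) : rsc x 1 = x.
Proof. exact: scale1r. Qed.
Lemma rscN1 (x : V) : rsc x (-1) = - x.
Proof. exact: scaleN1r. Qed.
Lemma rscA (x : V) l m : rsc (rsc x l) m = rsc x (l * m).
Proof. by rewrite /rsc scalerA. Qed.
Lemma rsc0v l : rsc (0 : V) l = 0.
Proof. exact: scaler0. Qed.
End Rsc.

Lemma zid (Z : zmodType) (a b c d : Z): (a + b) + (c + d) - (a + d) = b + c.
Proof. by apply/eqP; rewrite subr_eq; apply/eqP; rewrite [RHS]addrACA [b + a]addrC. Qed.

Lemma zid2 (Z : zmodType) (a b c : Z): (a + b) - (a - c) = b + c.
Proof. by rewrite opprB addrC addrA subrK addrC. Qed.

Lemma ridP (K : pzRingType) (s t m : K) : (1 + s) * t * (1 + m) - (t + s * t * m) = t * m + s * t.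
Proof. by rewrite mulrDl mul1r mulrDr mulr1 mulrDl zid addrC. Qed.

Section Closed.
Variable K : unitRingType.
Hypothesis HK : division_ring K.
Variables (sigma : K -> K) (eps : K).
Hypothesis Hadm : admissible sigma eps.

Lemma sigD x y : sigma (x + y) = sigma x + sigma y.
Proof. by case: Hadm => [[]]. Qed.
Lemma sigM x y : sigma (x * y) = sigma y * sigma x.
Proof. by case: Hadm => [[]]. Qed.
Lemma sig1 : sigma 1 = 1.
Proof. by case: Hadm => [[]]. Qed.
Lemma sig0 : sigma 0 = 0.
Proof. have h := sigD 0 0; rewrite addr0 in h. by apply: (addrI (sigma 0)); rewrite addr0 -h. Qed.
Lemma sigN x : sigma (- x) = - sigma x.
Proof. apply: (addrI (sigma x)); by rewrite -sigD !subrr sig0. Qed.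
Lemma sig_surj y : exists x, sigma x = y.
Proof. case: Hadm => [[_ _ _ [g _ h]]] _ _; by exists (g y). Qed.
Lemma sigB x y : sigma (x - y) = sigma x - sigma y.
Proof. by rewrite sigD sigN. Qed.

Variable R' : K -> Prop.
Hypothesis Hc : closed_codefect sigma eps R'.

Lemma c0 : R' 0. Proof. by case: Hc. Qed.
Lemma cB a b : R' a -> R' b -> R' (a - b). Proof. by case: Hc => _ h _ _; apply: h. Qed.
Lemma cN a : R' a -> R' (- a). Proof. by move=> h; rewrite -sub0r; apply: cB => //; apply: c0. Qed.
Lemma cD a b : R' a -> R' b -> R' (a + b).
Proof. by move=> ha hb; rewrite -[b]opprK; apply: cB => //; apply: cN. Qed.
Lemma cKse s : R' (s - sigma s * eps). Proof. by case: Hc => _ _ h _; apply: h; exists s. Qed.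
Lemma ccl t l : R' t -> R' (sigma l * t * l). Proof. by case: Hc => _ _ _ h; apply: h. Qed.
Lemma ctrans a b c : R' (a - b) -> R' (b - c) -> R' (a - c).
Proof. by move=> h1 h2; have := cD h1 h2; rewrite addrA subrK. Qed.
Lemma csym a b : R' (a - b) -> R' (b - a).
Proof. by move=> h; rewrite -opprB; apply: cN. Qed.
Lemma cadd a a' b b' : R' (a - a') -> R' (b - b') -> R' ((a + b) - (a' + b')).
Proof. by move=> h1 h2; rewrite opprD addrACA; apply: cD. Qed.
Lemma cscale a b l : R' (a - b) -> R' (sigma l * a * l - sigma l * b * l).
Proof. by move=> h; rewrite -mulrBl -mulrBr; apply: ccl. Qed.
Lemma cfrom a b : R' (a - b) -> R' b -> R' a.
Proof. by move=> h1 h2; have := cD h1 h2; rewrite subrK. Qed.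
Lemma cto a b : R' (a - b) -> R' a -> R' b.
Proof. by move=> h1 h2; apply: (cfrom (csym h1)). Qed.

Lemma cfull c : c != 0 -> (forall m, R' (c * m)) -> forall k, R' k.
Proof.
move=> cn h k; have cu := HK cn.
by have := h (c^-1 * k); rewrite mulrA mulrV // mul1r.
Qed.

Lemma cfullL c : c != 0 -> (forall m, R' (m * c)) -> forall k, R' k.
Proof.
move=> cn h k; have cu := HK cn.
by have := h (k * c^-1); rewrite -mulrA mulVr // mulr1.
Qed.

Lemma Pstep t mu : R' (sigma (1 + mu) * t * (1 + mu) - (t + sigma mu * t * mu)) ->
  R' (t * mu + sigma mu * t).
Proof.
have -> : sigma (1 + mu) * t * (1 + mu) - (t + sigma mu * t * mu) = t * mu + sigma mu * t.
  by rewrite sigD sig1 ridP.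
done.
Qed.

Lemma Pgood : ~ (forall k, R' k) -> forall t, (forall mu, R' (t * mu + sigma mu * t)) ->
  t + sigma t * eps = 0.
Proof.
move=> nf t h; case: (t + sigma t * eps =P 0) => // /eqP cn; exfalso; apply: nf.
apply: (cfullL cn) => m.
case: (sig_surj m) => mu <-.
have h2 := cKse (t * mu).
have := cB (h mu) h2.
by rewrite zid2 sigM mulrDr !mulrA.
Qed.


Lemma Pring r : R' r -> forall mu, R' (r * mu + sigma mu * r).
Proof.
move=> hr mu; apply: Pstep; apply: cB; first exact: ccl.
by apply: cD => //; apply: ccl.
Qed.

Lemma Padd a b : a + sigma a * eps = 0 -> b + sigma b * eps = 0 ->
  (a + b) + sigma (a + b) * eps = 0.
Proof. by move=> ha hb; rewrite sigD mulrDl addrACA ha hb addr0. Qed.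

End Closed.

Section Quad.
Variable K : unitRingType.
Hypothesis HK : division_ring K.
Variables (sigma : K -> K) (eps : K).
Hypothesis Hadm : admissible sigma eps.
Variable X : lmodType K^c.
Variables (R' : K -> Prop) (Q' : X -> K) (f' : X -> X -> K).
Hypothesis Hg : gen_quad_form sigma eps R' Q' f'.

Lemma gc : closed_codefect sigma eps R'. Proof. by case: Hg. Qed.
Lemma gsc x l : R' (Q' (rsc x l) - sigma l * Q' x * l). Proof. by case: Hg. Qed.
Lemma gadd x y : R' (Q' (x + y) - (Q' x + Q' y + f' x y)). Proof. by case: Hg. Qed.
Lemma fDl x x' y : f' (x + x') y = f' x y + f' x' y. Proof. by case: Hg => _ [[]]. Qed.
Lemma fDr x y y' : f' x (y + y') = f' x y + f' x y'. Proof. by case: Hg => _ [[]]. Qed.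
Lemma fZ x y l m : f' (rsc x l) (rsc y m) = sigma l * f' x y * m. Proof. by case: Hg => _ [[]]. Qed.
Lemma fherm x y : f' y x = sigma (f' x y) * eps. Proof. by case: Hg => _ []. Qed.
Lemma ftr x : exists t, f' x x = t + sigma t * eps. Proof. by case: Hg => _ []. Qed.
Lemma fr x y m : f' x (rsc y m) = f' x y * m.
Proof. by rewrite -{1}(rsc1 x) fZ (sig1 Hadm) mul1r. Qed.
Lemma fl x y l : f' (rsc x l) y = sigma l * f' x y.
Proof. by rewrite -{1}(rsc1 y) fZ mulr1. Qed.

Lemma Q0 : R' (Q' 0).
Proof. have := gsc 0 0; by rewrite rsc0 mulr0 subr0. Qed.
Lemma sing_scale x l : R' (Q' x) -> R' (Q' (rsc x l)).
Proof. move=> h; apply: (cfrom gc (gsc x l)); exact: (ccl gc). Qed.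
Lemma frad u x : (forall y, f' u y = 0) -> f' x u = 0.
Proof. by move=> h; rewrite fherm h (sig0 Hadm) mul0r. Qed.

Lemma totsing x y : nontrivial R' Q' -> R' (Q' x) -> (forall m, R' (Q' (rsc y m))) ->
  (forall m, R' (Q' (x + rsc y m))) -> f' x y = 0.
Proof.
move=> [z hz] hx hy hxy; case: (f' x y =P 0) => // /eqP cn; exfalso; apply: hz.
apply: (cfull HK cn) => m; rewrite -fr.
have h1 := cto gc (gadd x (rsc y m)) (hxy m).
have := cB gc h1 (cD gc hx (hy m)).
by rewrite [_ + f' _ _]addrC addrK.
Qed.
End Quad.

Lemma zid3 (Z : zmodType) (a b : Z): (a + b) - (b - a) = a + a.
Proof. by rewrite opprB addrACA subrr addr0. Qed.
Lemma zid4 (Z : zmodType) (a b c d : Z): (a - b) - (c + d) = ((a - c) - (b - d)) - (d + d).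
Proof. by rewrite !opprD !opprK !addrA addrK (addrAC a (-c)). Qed.
Lemma zid5 (Z : zmodType) (a b : Z): (a - b) + (b + b) = a + b.
Proof. by rewrite addrA subrK. Qed.

Section SS.
Variable K : unitRingType.
Variable T : lmodType K^c.
Implicit Types A B C : T -> Prop.
Lemma ss_refl A : same_set A A. Proof. by []. Qed.
Lemma ss_sym A B : same_set A B -> same_set B A. Proof. by move=> h x; split => /h. Qed.
Lemma ss_trans A B C : same_set A B -> same_set B C -> same_set A C.
Proof. by move=> h1 h2 x; split => [/h1/h2|/h2/h1]. Qed.
Lemma span2_mem (v w : T) l m : span2 v w (rsc v l + rsc w m). Proof. by exists l, m. Qed.
Lemma span2_a (v w : T) : span2 v w v.
Proof. by exists 1, 0; rewrite rsc1 rsc0 addr0. Qed.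
Lemma span2_b (v w : T) : span2 v w w.
Proof. by exists 0, 1; rewrite rsc1 rsc0 add0r. Qed.
Lemma span2_add (v w x y : T) : span2 v w x -> span2 v w y -> span2 v w (x + y).
Proof.
move=> [l [m ->]] [l' [m' ->]]; exists (l + l'), (m + m').
by rewrite !rscD addrACA.
Qed.
Lemma span2_sc (v w x : T) n : span2 v w x -> span2 v w (rsc x n).
Proof. by move=> [l [m ->]]; exists (l * n), (m * n); rewrite rscDr !rscA. Qed.
End SS.

Section Main.
Variable K : unitRingType.
Hypothesis HK : division_ring K.
Variables (sigma : K -> K) (eps : K).
Hypothesis Hadm : admissible sigma eps.
Variables (V : lmodType K^c) (R : K -> Prop) (Q : V -> K) (f : V -> V -> K).
Hypothesis Hq : gen_quad_form sigma eps R Q f.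
Hypothesis Hnt : nontrivial R Q.
Variable U : V -> Prop.
Hypothesis HU : subspace U.
Hypothesis HUf : forall x, U x -> Rad_f f x.
Hypothesis HUq : forall x, U x -> Rad_q R Q f x -> x = 0.
Variables (W : lmodType K^c) (pi : {linear V -> W}).
Hypothesis Hpi_surj : forall w : W, exists x, pi x = w.
Hypothesis Hpi_ker : forall x, pi x = 0 <-> U x.

Let Rc := gc Hq.
Let RU := R_U R Q U.

Lemma piZ x l : pi (rsc x l) = rsc (pi x) l. Proof. exact: linearZ. Qed.
Lemma piD x y : pi (x + y) = pi x + pi y. Proof. exact: linearD. Qed.
Lemma pi0 : pi 0 = 0. Proof. exact: linear0. Qed.
Lemma piB x y : pi (x - y) = pi x - pi y. Proof. exact: linearB. Qed.

Lemma U0 : U 0. Proof. by case: HU. Qed.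
Lemma UD x y : U x -> U y -> U (x + y). Proof. by case: HU => _ h _; apply: h. Qed.
Lemma UZ x l : U x -> U (rsc x l). Proof. by case: HU => _ _ h; apply: h. Qed.
Lemma UN x : U x -> U (- x). Proof. by move=> h; rewrite -rscN1; apply: UZ. Qed.

Lemma fUr x u : U u -> f x u = 0. Proof. by move=> h; apply: (frad Hadm Hq); apply: HUf. Qed.
Lemma fUl x u : U u -> f u x = 0. Proof. by move=> h; apply: HUf. Qed.

Lemma QaddU x u : U u -> R (Q (x + u) - (Q x + Q u)).
Proof. by move=> h; have := gadd Hq x u; rewrite fUr // addr0. Qed.

Lemma QN x : R (Q (- x) - Q x).
Proof.
have := gsc Hq x (-1); rewrite rscN1 (sigN Hadm) (sig1 Hadm).
by rewrite mulN1r mulrN1 opprK.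
Qed.

Lemma twoQ u : U u -> R (Q u + Q u).
Proof.
move=> hu; have := QaddU u (UN hu); rewrite subrr => h.
have h2 := cto Rc h (Q0 Hq).
by have := cB Rc h2 (QN u); rewrite zid3.
Qed.

Lemma RUc : closed_codefect sigma eps RU.
Proof.
split.
- by exists 0; split; [exact: U0 | rewrite sub0r; apply: (cN Rc); apply: (Q0 Hq)].
- move=> a b [u [hu ha]] [u' [hu' hb]]; exists (u + u'); split; first exact: UD.
  apply: (ctrans Rc _ (csym Rc (QaddU u hu'))).
  by rewrite zid4; apply: (cB Rc); [apply: (cB Rc) | apply: twoQ].
- move=> t ht; exists 0; split; first exact: U0.
  by apply: (cB Rc); [case: ht => s ->; apply: (cKse Rc) | apply: (Q0 Hq)].
- move=> t l [u [hu h]]; exists (rsc u l); split; first exact: UZ.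
  exact: (ctrans Rc (cscale Rc l h) (csym Rc (gsc Hq u l))).
Qed.

Lemma RtoRU t : R t -> RU t.
Proof. by move=> h; exists 0; split; [exact: U0 | apply: (cB Rc) => //; apply: (Q0 Hq)]. Qed.

Lemma piker x y : pi x = pi y -> U (x - y).
Proof. by move=> h; apply/Hpi_ker; rewrite piB h subrr. Qed.

Lemma pinj x y : R (Q x) -> R (Q y) -> pi x = pi y -> x = y.
Proof.
move=> hx hy h; have hu := piker h.
have := QaddU y hu; rewrite [y + _]addrC subrK => h1.
have h2 := cto Rc h1 hx.
have h3 : R (Q (x - y)) by have := cB Rc h2 hy; rewrite [Q y + _]addrC addrK.
by apply/eqP; rewrite -subr_eq0; apply/eqP; apply: HUq => //; split => //; apply: HUf.
Qed.

Lemma lift a : RU (Q a) -> exists v, pi v = pi a /\ R (Q v).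
Proof.
move=> [u [hu h]]; exists (a - u); split.
  by rewrite piB (proj2 (Hpi_ker u) hu) subr0.
have h1 := QaddU a (UN hu).
have h2 : R ((Q a + Q (- u)) - (Q a + Q u)).
  by apply: (cadd Rc); [rewrite subrr; apply: (c0 Rc) | apply: QN].
apply: (cfrom Rc (ctrans Rc h1 h2)).
by rewrite -zid5; apply: (cD Rc) => //; apply: twoQ.
Qed.

Lemma exQ x y : pi y = pi x -> RU (Q y - Q x).
Proof.
move=> h; have hu := piker h; exists (y - x); split => //.
have := QaddU x hu; rewrite [x + _]addrC subrK.
by rewrite opprD addrA.
Qed.

Lemma exf x x' y y' : pi y = pi x -> pi y' = pi x' -> f y y' = f x x'.
Proof.
move=> h h'; have hu := piker h; have hu' := piker h'.
have -> : y = x + (y - x) by rewrite [x + _]addrC subrK.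
have -> : y' = x' + (y' - x') by rewrite [x' + _]addrC subrK.
by rewrite (fDl Hq) (fUl _ hu) (fDr Hq) (fUr _ hu') !addr0.
Qed.

Section QUsec.
Variables (QU : W -> K) (fU : W -> W -> K).
Hypothesis HQU : forall x, RU (QU (pi x) - Q x).
Hypothesis HfU : forall x y, fU (pi x) (pi y) = f x y.

Lemma gqU : gen_quad_form sigma eps RU QU fU.
Proof.
split.
- exact: RUc.
- split; first split.
  + move=> w w' y; case: (Hpi_surj w) => a <-; case: (Hpi_surj w') => b <-.
    case: (Hpi_surj y) => c <-; by rewrite -piD !HfU (fDl Hq).
  + move=> w w' y; case: (Hpi_surj w) => a <-; case: (Hpi_surj w') => b <-.
    case: (Hpi_surj y) => c <-; by rewrite -piD !HfU (fDr Hq).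
  + move=> w y l m; case: (Hpi_surj w) => a <-; case: (Hpi_surj y) => b <-.
    by rewrite -!piZ !HfU (fZ Hq).
  + move=> w y; case: (Hpi_surj w) => a <-; case: (Hpi_surj y) => b <-.
    by rewrite !HfU (fherm Hq).
  + move=> w; case: (Hpi_surj w) => a <-; rewrite HfU; exact: (ftr Hq).
- move=> w l; case: (Hpi_surj w) => x <-; rewrite -piZ.
  apply: (ctrans RUc (HQU (rsc x l))).
  apply: (ctrans RUc (RtoRU (gsc Hq x l))).
  exact: (cscale RUc l (csym RUc (HQU x))).
- move=> w w'; case: (Hpi_surj w) => x <-; case: (Hpi_surj w') => y <-; rewrite -piD.
  apply: (ctrans RUc (HQU (x + y))).
  apply: (ctrans RUc (RtoRU (gadd Hq x y))).
  apply: (cadd RUc); first by apply: (cadd RUc); apply: (csym RUc).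
  by rewrite HfU subrr; apply: (c0 RUc).
Qed.

Lemma singU x : RU (QU (pi x)) <-> RU (Q x).
Proof. by split => h; [apply: (cto RUc (HQU x)) | apply: (cfrom RUc (HQU x))]. Qed.

Lemma image_same (A B : V -> Prop) : same_set A B -> same_set (img pi A) (img pi B).
Proof. by move=> h y; split => [[x [/h hx <-]]|[x [/h hx <-]]]; exists x. Qed.
Lemma image_span1 v : same_set (img pi (span1 v)) (span1 (pi v)).
Proof.
move=> y; split.
  by move=> [x [[l ->] <-]]; exists l; rewrite piZ.
by move=> [l ->]; exists (rsc v l); split; [exists l | rewrite piZ].
Qed.
Lemma image_span2 v w : same_set (img pi (span2 v w)) (span2 (pi v) (pi w)).
Proof.
move=> y; split.
  by move=> [x [[l [m ->]] <-]]; exists l, m; rewrite piD !piZ.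
move=> [l [m ->]]; exists (rsc v l + rsc w m); split; first exact: span2_mem.
by rewrite piD !piZ.
Qed.

Lemma pt_sing p x : Sq_point R Q p -> p x -> R (Q x).
Proof. by move=> [v [_ hs hv]] /hs [l ->]; apply: (sing_scale Hq). Qed.
Lemma ln_sing L x : Sq_line R Q L -> L x -> R (Q x).
Proof. by move=> [_ h]; apply: h. Qed.

Lemma inj_sets (A B : V -> Prop) : (forall x, A x -> R (Q x)) -> (forall x, B x -> R (Q x)) ->
  same_set (img pi A) (img pi B) -> same_set A B.
Proof.
move=> hA hB h x; split => hx.
  have [y [hy e]] : img pi B (pi x) by apply/h; exists x.
  by rewrite -(pinj (hB _ hy) (hA _ hx) e).
have [y [hy e]] : img pi A (pi x) by apply/h; exists x.
by rewrite -(pinj (hA _ hy) (hB _ hx) e).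
Qed.

Lemma inc_sets (A B : V -> Prop) : (forall x, A x -> R (Q x)) -> (forall x, B x -> R (Q x)) ->
  (ssub A B <-> ssub (img pi A) (img pi B)).
Proof.
move=> hA hB; split.
  by move=> h y [x [hx <-]]; exists x; split => //; apply: h.
move=> h x hx.
have [y [hy e]] : img pi B (pi x) by apply: h; exists x.
by rewrite -(pinj (hB _ hy) (hA _ hx) e).
Qed.

Lemma pi_ne v : R (Q v) -> v <> 0 -> pi v <> 0.
Proof.
move=> hv vn /Hpi_ker hu; apply: vn; apply: HUq => //; split => //; exact: HUf.
Qed.

Lemma line_img L : Sq_line R Q L -> is_line (img pi L).
Proof.
move=> [[v [w [ind hs]]] hsing]; exists (pi v), (pi w); split; last first.
  exact: ss_trans (image_same hs) (image_span2 v w).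
move=> l m h; apply: ind.
have hx : L (rsc v l + rsc w m) by apply/hs; exact: span2_mem.
apply: HUq; first by apply/Hpi_ker; rewrite piD !piZ.
split; [apply: HUf; apply/Hpi_ker; rewrite piD !piZ // | exact: hsing].
Qed.
Lemma liftW w : RU (QU w) -> exists v, pi v = w /\ R (Q v).
Proof. by case: (Hpi_surj w) => a <- /singU /lift. Qed.

Lemma iso_gen (Pt2 Ln2 : (W -> Prop) -> Prop) :
  (forall p, Sq_point R Q p -> Pt2 (img pi p)) ->
  (forall L, Sq_line R Q L -> Ln2 (img pi L)) ->
  (forall p2, Pt2 p2 -> exists w, [/\ w <> 0, same_set p2 (span1 w) & RU (QU w)]) ->
  (forall L2, Ln2 L2 -> exists a b, [/\ independent2 a b, same_set L2 (span2 a b),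
      RU (QU a), RU (QU b) & fU a b = 0]) ->
  induces_iso pi (Sq_point R Q) (Sq_line R Q) Pt2 Ln2.
Proof.
move=> HP1 HL1 HP2 HL2; split; first exact: HP1.
split.
  move=> p p' hp hp'; apply: inj_sets => x; [exact: pt_sing hp | exact: pt_sing hp'].
split.
  move=> p2 /HP2 [w [wn hs hw]]; case: (liftW hw) => v [ev hv]; exists (span1 v); split.
    exists v; split => // e; apply: wn; by rewrite -ev e pi0.
  apply: ss_trans (image_span1 v) _; rewrite ev; exact: ss_sym hs.
split; first exact: HL1.
split.
  move=> L L' hL hL'; apply: inj_sets => x; [exact: ln_sing hL | exact: ln_sing hL'].
split.
  move=> L2 /HL2 [a [b [ind hs ha hb hf]]].
  case: (liftW ha) => v [ev hv]; case: (liftW hb) => w [ew hw].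
  exists (span2 v w); split; last first.
    apply: ss_trans (image_span2 v w) _; rewrite ev ew; exact: ss_sym hs.
  split.
    exists v, w; split; last by [].
    by move=> l m h; apply: ind; rewrite -ev -ew -!piZ -piD h pi0.
  move=> x [l [m ->]].
  have := gadd Hq (rsc v l) (rsc w m).
  rewrite (fZ Hq) -HfU ev ew hf mulr0 mul0r addr0 => h.
  apply: (cfrom Rc h); apply: (cD Rc); exact: (sing_scale Hq).
move=> p L hp hL; apply: inc_sets => x; [exact: pt_sing hp | exact: ln_sing hL].
Qed.

Lemma case1 : nontrivial RU QU ->
  induces_iso pi (Sq_point R Q) (Sq_line R Q) (Sq_point RU QU) (Sq_line RU QU).
Proof.
move=> hnt; apply: iso_gen.
- move=> p [v [vn hs hv]]; exists (pi v); split.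
  + exact: pi_ne.
  + exact: ss_trans (image_same hs) (image_span1 v).
  + by apply/singU; apply: RtoRU.
- move=> L hL; split; first exact: line_img.
  move=> y [x [hx <-]]; apply/singU; apply: RtoRU; exact: ln_sing hL hx.
- by move=> p2 [w [wn hs hw]]; exists w.
- move=> L2 [[a [b [ind hs]]] hsing]; exists a, b.
  have hm : forall l m, RU (QU (rsc a l + rsc b m)).
    by move=> l m; apply: hsing; apply/hs; exact: span2_mem.
  have ha : RU (QU a) by have := hm 1 0; rewrite rsc1 rsc0 addr0.
  split => //.
  + by have := hm 0 1; rewrite rsc1 rsc0 add0r.
  + apply: (totsing HK Hadm gqU) => //.
    * by move=> m; have := hm 0 m; rewrite rsc0 add0r.
    * by move=> m; have := hm 1 m; rewrite rsc1.
Qed.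

Lemma case2 : ~ nontrivial RU QU ->
  [/\ alternating f, alternating fU &
      induces_iso pi (Sq_point R Q) (Sq_line R Q) (Sf_point fU) (Sf_line fU)].
Proof.
move=> hnt.
have htriv : forall w, RU (QU w).
  by move=> w; case: (classic (RU (QU w))) => // h; exfalso; apply: hnt; exists w.
have hfxy : forall x y, RU (f x y).
  move=> x y; have := gadd gqU (pi x) (pi y); rewrite HfU => h.
  have h1 := cto RUc h (htriv _).
  by have := cB RUc h1 (cD RUc (htriv (pi x)) (htriv (pi y))); rewrite [_ + f x y]addrC addrK.
have nR : ~ (forall k, R k) by case: Hnt => z hz h; apply: hz.
have alt : alternating f.
  move=> x; case: (classic (forall k, RU k)) => hall.
  - case: (ftr Hq x) => t ->.
    case: (hall t) => u [hu ht].
    have P1 := Pgood HK Hadm Rc nR (Pring Hadm Rc ht).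
    have P2 : Q u + sigma (Q u) * eps = 0.
      apply: (Pgood HK Hadm Rc nR) => mu; apply: (Pstep Hadm).
      apply: (ctrans Rc (csym Rc (gsc Hq u (1 + mu)))).
      rewrite rscD rsc1.
      apply: (ctrans Rc (QaddU u (UZ mu hu))).
      apply: (cadd Rc); [rewrite subrr; exact: (c0 Rc) | exact: gsc Hq u mu].
    by have := Padd Hadm P1 P2; rewrite subrK.
  - case: (f x x =P 0) => // /eqP cn; exfalso; apply: hall.
    apply: (cfull HK cn) => m; rewrite -(fr Hadm Hq); exact: hfxy.
split => //.
  by move=> w; case: (Hpi_surj w) => x <-; rewrite HfU.
apply: iso_gen.
- move=> p [v [vn hs hv]]; exists (pi v); split.
  + exact: pi_ne.
  + exact: ss_trans (image_same hs) (image_span1 v).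
  + by rewrite HfU.
- move=> L hL; split; first exact: line_img.
  move=> y y' [x [hx <-]] [x' [hx' <-]]; rewrite HfU.
  case: hL => [[v [w [ind hs]]] hsing].
  apply: (totsing HK Hadm Hq Hnt).
  + exact: hsing.
  + move=> m; apply: hsing; apply/hs; apply: span2_sc; exact/hs.
  + move=> m; apply: hsing; apply/hs; apply: span2_add; [exact/hs | apply: span2_sc; exact/hs].
- move=> p2 [w [wn hs _]]; exists w; split => //.
- move=> L2 [[a [b [ind hs]]] hiso]; exists a, b; split => //.
  apply: hiso; apply/hs; [exact: span2_a | exact: span2_b].
Qed.
End QUsec.
End Main.

Theorem mainTheorem14
  (K : unitRingType) (HK : division_ring K)
  (sigma : K -> K) (eps : K) (Hadm : admissible sigma eps)
  (V : lmodType K^c) (R : K -> Prop) (Q : V -> K) (f : V -> V -> K)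
  (Hq : gen_quad_form sigma eps R Q f)
  (Hnt : nontrivial R Q)
  (Hspan : forall x : V, span_of (fun v => R (Q v)) x)
  (U : V -> Prop) (HU : subspace U)
  (HUf : forall x, U x -> Rad_f f x)
  (HUq : forall x, U x -> Rad_q R Q f x -> x = 0)
  (W : lmodType K^c) (pi : {linear V -> W})
  (Hpi_surj : forall w : W, exists x, pi x = w)
  (Hpi_ker : forall x, pi x = 0 <-> U x) :
  (exists (QU : W -> K) (fU : W -> W -> K),
     (forall x, R_U R Q U (QU (pi x) - Q x)) /\
     (forall x y, fU (pi x) (pi y) = f x y)) /\
  (forall (QU : W -> K) (fU : W -> W -> K),
     (forall x, R_U R Q U (QU (pi x) - Q x)) ->
     (forall x y, fU (pi x) (pi y) = f x y) ->
     [/\ gen_quad_form sigma eps (R_U R Q U) QU fU,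
         nontrivial (R_U R Q U) QU ->
           induces_iso pi (Sq_point R Q) (Sq_line R Q)
                          (Sq_point (R_U R Q U) QU) (Sq_line (R_U R Q U) QU) &
         ~ nontrivial (R_U R Q U) QU ->
           [/\ alternating f, alternating fU &
               induces_iso pi (Sq_point R Q) (Sq_line R Q)
                              (Sf_point fU) (Sf_line fU)]]).
Proof.
split.
  have exP : forall w, exists x, pi x == w.
    by move=> w; case: (Hpi_surj w) => x <-; exists x.
  pose lf w := xchoose (exP w).
  have hlf : forall w, pi (lf w) = w by move=> w; exact: (eqP (xchooseP (exP w))).
  exists (fun w => Q (lf w)), (fun w w' => f (lf w) (lf w')); split.
    by move=> x; exact: (exQ Hadm Hq HUf Hpi_ker (hlf (pi x))).
  by move=> x y; exact: (exf Hadm Hq HUf Hpi_ker (hlf (pi x)) (hlf (pi y))).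
move=> QU fU HQU HfU; split.
- exact: (gqU Hadm Hq HU HUf Hpi_surj HQU HfU).
- exact: (case1 HK Hadm Hq HU HUf HUq Hpi_surj Hpi_ker HQU HfU).
- exact: (case2 HK Hadm Hq Hnt HU HUf HUq Hpi_surj Hpi_ker HQU HfU).
Qed.
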